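(* Let $\lambda x.\vec{t}$ be a closed $\lambda$-abstraction. Then $\lambda x.\vec{t}\in[\![\sharp\mathbb{B}\rightarrow\sharp\mathbb{B}]\!]$ if and only if $\lambda x.\vec{t}$ represents a unitary operator $F:\mathbb{C}^2\to\mathbb{C}^2$ (i.e. a linear map with $\langle F(u)|F(v)\rangle=\langle u|v\rangle$ for all $u,v\in\mathbb{C}^2$).
   Context: Calculus. Fix a countably infinite set of variables. Pure values: $v,w::=x\mid\lambda x.\vec{s}\mid *\mid (v_1,v_2)\mid \mathtt{inl}(v)\mid\mathtt{inr}(v)$. Pure terms: $s,t::=v\mid s\,t\mid t;\vec{s}\mid \mathtt{let}\,(x_1,x_2)=t\,\mathtt{in}\,\vec{s}\mid \mathtt{match}\,t\,\{\mathtt{inl}\,x_1\mapsto\vec{s}_1\mid\mathtt{inr}\,x_2\mapsto\vec{s}_2\}$. Term distributions: $\vec{t}::=\vec{0}\mid t\mid \vec{s}+\vec{t}\mid\alpha\cdot\vec{t}$ ($\alpha\in\mathbb{C}$); value distributions are those built only from pure values. Terms are considered up to $\alpha$-conversion. Top-level distributions are considered modulo the congruence $\equiv$ generated by $\vec t+\vec 0\equiv\vec t$, $1\cdot\vec t\equiv\vec t$, $\alpha\cdot(\beta\cdot\vec t)\equiv\alpha\beta\cdot\vec t$, commutativity and associativity of $+$, $(\alpha+\beta)\cdot\vec t\equiv\alpha\cdot\vec t+\beta\cdot\vec t$, $\alpha\cdot(\vec t_1+\vec t_2)\equiv\alpha\cdot\vec t_1+\alpha\cdot\vec t_2$; this congruence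 only goes through $+$ and $\cdot$ and never inside pure terms (bodies of abstractions, sequences, lets, match branches are raw distributions up to $\alpha$-conversion only). In particular $0\cdot t\not\equiv\vec 0$; every distribution has a unique canonical form $\sum_i\alpha_i\cdot t_i$ with pairwise distinct pure terms $t_i$ (coefficients possibly $0$), whose set $\{t_i\}$ is its domain. Constructs are extended by linearity: for $\vec v=\sum_i\alpha_i v_i$, $\vec w=\sum_j\beta_j w_j$, $\vec t=\sum_k\gamma_k t_k$, $\vec s=\sum_l\delta_l s_l$: $(\vec v,\vec w)=\sum_{i,j}\alpha_i\beta_j(v_i,w_j)$, $\mathtt{inl}(\vec v)=\sum_i\alpha_i\mathtt{inl}(v_i)$ (similarly $\mathtt{inr}$), $\vec t\,\vec s=\sum_{k,l}\gamma_k\delta_l\, t_k s_l$, and $\vec t;\vec s$, $\mathtt{let}$, $\mathtt{match}$ are linear in their first argument. $\mathtt{tt}:=\mathtt{inl}( * )$, $\mathtt{ff}:=\mathtt{inr}( * )$. $\vec t[x:=w]$ is substitution of a pure value (linear in $\vec t$); bilinear substitution is $\vec t\langle x:=\vec w\rangle:=\sum_j\beta_j\cdot\vec t[x:=w_j]$ for $\vec w=\sum_j\beta_j w_j$ canonical. Evaluation. Atomic evaluation $t\triangleright\vec t'$: $(\lambda x.\vec t)\,v\triangleright\vec t[x:=v]$; $*;\vec s\triangleright\vec s$; $\mathtt{let}\,(x,y)=(v,w)\,\mathtt{in}\,\vec s\triangleright\vec s[x:=v,y:=w]$; $\mathtt{match}\,\mathtt{inl}(v)\{\ldots\}\triangleright\vec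 s_1[x_1:=v]$; $\mathtt{match}\,\mathtt{inr}(v)\{\ldots\}\triangleright\vec s_2[x_2:=v]$; and if $t\triangleright\vec t'$ then $s\,t\triangleright s\,\vec t'$, $t\,v\triangleright\vec t'\,v$, $t;\vec s\triangleright\vec t';\vec s$, $\mathtt{let}\,(x,y)=t\,\mathtt{in}\,\vec s\triangleright\mathtt{let}\,(x,y)=\vec t'\,\mathtt{in}\,\vec s$, $\mathtt{match}\,t\{\ldots\}\triangleright\mathtt{match}\,\vec t'\{\ldots\}$ (here $v,w$ pure values). One-step evaluation: $\vec t\succ\vec t'$ iff $\vec t\equiv\alpha\cdot s+\vec r$ and $\vec t'\equiv\alpha\cdot\vec s'+\vec r$ with $s\triangleright\vec s'$. Evaluation $\vec t\succ^*\vec t'$ is the reflexive-transitive closure. Semantics. $\vec{\mathcal V}$ is the set of closed value distributions. For $\vec v=\sum_i\alpha_i v_i$, $\vec w=\sum_j\beta_jw_j$ in canonical form, $\langle\vec v|\vec w\rangle=\sum_{i,j}\overline{\alpha_i}\beta_j\delta_{v_i,w_j}$, $\|\vec v\|=\sqrt{\langle\vec v|\vec v\rangle}$, $\mathcal S=\{\vec v:\|\vec v\|=1\}$; $\mathrm{Span}(X)$ is the set of finite linear combinations of elements of $X$. Types include $\mathbb U$, $A+B$, $\sharp A$, $A\rightarrow B$ with $[\![\mathbb U]\!]=\{*\}$, $[\![A+B]\!]=\{\mathtt{inl}(\vec v):\vec v\in[\![A]\!]\}\cup\{\mathtt{inr}(\vec w):\vec w\in[\![B]\!]\}$, $[\![\sharp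 A]\!]=\mathrm{Span}([\![A]\!])\cap\mathcal S$, $[\![A\rightarrow B]\!]=\{\lambda x.\vec t\ \text{closed}:\forall\vec v\in[\![A]\!],\ \vec t\langle x:=\vec v\rangle\Vdash B\}$, where $\vec t\Vdash A$ means $\vec t\succ^*\vec v$ for some $\vec v\in[\![A]\!]$. $\mathbb B:=\mathbb U+\mathbb U$. The Boolean projection $\pi_{\mathbb B}:\mathrm{Span}(\{\mathtt{tt},\mathtt{ff}\})\to\mathbb C^2$ sends $\alpha\cdot\mathtt{tt}\mapsto(\alpha,0)$, $\beta\cdot\mathtt{ff}\mapsto(0,\beta)$, $\alpha\cdot\mathtt{tt}+\beta\cdot\mathtt{ff}\mapsto(\alpha,\beta)$. A closed term distribution $\vec t$ represents $F:\mathbb C^2\to\mathbb C^2$ if for every $\vec v\in\mathrm{Span}(\{\mathtt{tt},\mathtt{ff}\})$ there is $\vec w\in\mathrm{Span}(\{\mathtt{tt},\mathtt{ff}\})$ with $\vec t\,\vec v\succ^*\vec w$ and $\pi_{\mathbb B}(\vec w)=F(\pi_{\mathbb B}(\vec v))$. *)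

(* Defs.v *)
From HB Require Import structures.
From mathcomp Require Import all_boot all_algebra.
From mathcomp Require Import complex.
From mathcomp Require Import boolp reals Rstruct.
Set Implicit Arguments. Unset Strict Implicit. Unset Printing Implicit Defensive.
Import GRing.Theory Num.Theory.
Local Open Scope ring_scope.

Definition Cplx := (Rdefinitions.R)[i].

(** Binders: [Lam] binds one variable in its body; [LetP t s] binds two
    variables in [s] (index 1 = x1, index 0 = x2); [Match t s1 s2] binds one
    variable in each branch. *)
Inductive value : Type :=
| Var   : nat -> value
| Lam   : dist -> value
| Star  : value
| Pair  : value -> value -> value
| Inl   : value -> value
| Inr   : value -> value
with term : Type :=
| Val   : value -> term
| App   : term -> term -> term
| Seq   : term -> dist -> term
| LetP  : term -> dist -> term
| Match : term -> dist -> dist -> term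
with dist : Type :=
| DZero  : dist
| DT     : term -> dist
| DAdd   : dist -> dist -> dist
| DScale : Cplx -> dist -> dist.

HB.instance Definition _ := gen_eqMixin term.

Definition tt_v : value := Inl Star.
Definition ff_v : value := Inr Star.

Inductive dequiv : dist -> dist -> Prop :=
| dq_refl d : dequiv d d
| dq_sym d e : dequiv d e -> dequiv e d
| dq_trans d e f : dequiv d e -> dequiv e f -> dequiv d f
| dq_add d1 d1' d2 d2' : dequiv d1 d1' -> dequiv d2 d2' ->
    dequiv (DAdd d1 d2) (DAdd d1' d2')
| dq_scale a d d' : dequiv d d' -> dequiv (DScale a d) (DScale a d')
| dq_add0 d : dequiv (DAdd d DZero) d
| dq_scale1 d : dequiv (DScale 1 d) d
| dq_scaleA a b d : dequiv (DScale a (DScale b d)) (DScale (a * b) d)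
| dq_addC d e : dequiv (DAdd d e) (DAdd e d)
| dq_addA d e f : dequiv (DAdd d (DAdd e f)) (DAdd (DAdd d e) f)
| dq_scaleDl a b d : dequiv (DScale (a + b) d) (DAdd (DScale a d) (DScale b d))
| dq_scaleDr a d e : dequiv (DScale a (DAdd d e)) (DAdd (DScale a d) (DScale a e)).

Fixpoint dbind (f : term -> dist) (d : dist) : dist :=
  match d with
  | DZero => DZero
  | DT t => f t
  | DAdd d1 d2 => DAdd (dbind f d1) (dbind f d2)
  | DScale a d => DScale a (dbind f d)
  end.

Definition dmap (f : term -> term) (d : dist) : dist := dbind (fun t => DT (f t)) d.

Definition dmapv (f : value -> value) (d : dist) : dist :=
  dbind (fun t => match t with Val v => DT (Val (f v)) | _ => DZero end) d.

Definition dapp (d1 d2 : dist) : dist :=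
  dbind (fun t => dmap (App t) d2) d1.

Fixpoint coef (d : dist) (u : term) : Cplx :=
  match d with
  | DZero => 0
  | DT t => if t == u then 1 else 0
  | DAdd d1 d2 => coef d1 u + coef d2 u
  | DScale a d => a * coef d u
  end.

Fixpoint dom_raw (d : dist) : seq term :=
  match d with
  | DZero => [::]
  | DT t => [:: t]
  | DAdd d1 d2 => dom_raw d1 ++ dom_raw d2
  | DScale _ d => dom_raw d
  end.

Definition dom (d : dist) : seq term := undup (dom_raw d).

Fixpoint lift_v (c : nat) (v : value) : value :=
  match v with
  | Var n => Var (if (n < c)%N then n else n.+1)
  | Lam d => Lam (lift_d c.+1 d)
  | Star => Star
  | Pair v1 v2 => Pair (lift_v c v1) (lift_v c v2)
  | Inl v => Inl (lift_v c v)
  | Inr v => Inr (lift_v c v)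
  end
with lift_t (c : nat) (t : term) : term :=
  match t with
  | Val v => Val (lift_v c v)
  | App s t => App (lift_t c s) (lift_t c t)
  | Seq t s => Seq (lift_t c t) (lift_d c s)
  | LetP t s => LetP (lift_t c t) (lift_d c.+2 s)
  | Match t s1 s2 => Match (lift_t c t) (lift_d c.+1 s1) (lift_d c.+1 s2)
  end
with lift_d (c : nat) (d : dist) : dist :=
  match d with
  | DZero => DZero
  | DT t => DT (lift_t c t)
  | DAdd d1 d2 => DAdd (lift_d c d1) (lift_d c d2)
  | DScale a d => DScale a (lift_d c d)
  end.

Fixpoint subst_v (k : nat) (w : value) (v : value) : value :=
  match v with
  | Var n => if n == k then w else if (k < n)%N then Var n.-1 else Var n
  | Lam d => Lam (subst_d k.+1 (lift_v 0 w) d)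
  | Star => Star
  | Pair v1 v2 => Pair (subst_v k w v1) (subst_v k w v2)
  | Inl v => Inl (subst_v k w v)
  | Inr v => Inr (subst_v k w v)
  end
with subst_t (k : nat) (w : value) (t : term) : term :=
  match t with
  | Val v => Val (subst_v k w v)
  | App s t => App (subst_t k w s) (subst_t k w t)
  | Seq t s => Seq (subst_t k w t) (subst_d k w s)
  | LetP t s => LetP (subst_t k w t) (subst_d k.+2 (lift_v 0 (lift_v 0 w)) s)
  | Match t s1 s2 =>
      Match (subst_t k w t) (subst_d k.+1 (lift_v 0 w) s1)
            (subst_d k.+1 (lift_v 0 w) s2)
  end
with subst_d (k : nat) (w : value) (d : dist) : dist :=
  match d with
  | DZero => DZero
  | DT t => DT (subst_t k w t)
  | DAdd d1 d2 => DAdd (subst_d k w d1) (subst_d k w d2)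
  | DScale a d => DScale a (subst_d k w d)
  end.

Definition subst1 (d : dist) (v : value) : dist := subst_d 0 v d.

Definition subst2 (d : dist) (v w : value) : dist :=
  subst_d 0 v (subst_d 0 (lift_v 0 w) d).

Definition bsubst (d : dist) (e : dist) : dist :=
  dbind (fun t => match t with Val w => subst1 d w | _ => DZero end) e.

Fixpoint wf_v (k : nat) (v : value) : Prop :=
  match v with
  | Var n => (n < k)%N
  | Lam d => wf_d k.+1 d
  | Star => True
  | Pair v1 v2 => wf_v k v1 /\ wf_v k v2
  | Inl v => wf_v k v
  | Inr v => wf_v k v
  end
with wf_t (k : nat) (t : term) : Prop :=
  match t with
  | Val v => wf_v k v
  | App s t => wf_t k s /\ wf_t k t
  | Seq t s => wf_t k t /\ wf_d k s
  | LetP t s => wf_t k t /\ wf_d k.+2 s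
  | Match t s1 s2 => [/\ wf_t k t, wf_d k.+1 s1 & wf_d k.+1 s2]
  end
with wf_d (k : nat) (d : dist) : Prop :=
  match d with
  | DZero => True
  | DT t => wf_t k t
  | DAdd d1 d2 => wf_d k d1 /\ wf_d k d2
  | DScale _ d => wf_d k d
  end.

Definition closed_value (v : value) : Prop := wf_v 0 v.
Definition closed_dist (d : dist) : Prop := wf_d 0 d.

Fixpoint is_value_dist (d : dist) : Prop :=
  match d with
  | DZero => True
  | DT (Val _) => True
  | DT _ => False
  | DAdd d1 d2 => is_value_dist d1 /\ is_value_dist d2
  | DScale _ d => is_value_dist d
  end.

Definition closed_value_dist (d : dist) : Prop := is_value_dist d /\ closed_dist d.

Inductive atomic : term -> dist -> Prop :=
| at_beta d v : atomic (App (Val (Lam d)) (Val v)) (subst1 d v)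
| at_seq s : atomic (Seq (Val Star) s) s
| at_let v w s : atomic (LetP (Val (Pair v w)) s) (subst2 s v w)
| at_inl v s1 s2 : atomic (Match (Val (Inl v)) s1 s2) (subst1 s1 v)
| at_inr v s1 s2 : atomic (Match (Val (Inr v)) s1 s2) (subst1 s2 v)
| at_appR s t d : atomic t d -> atomic (App s t) (dmap (App s) d)
| at_appL t v d : atomic t d ->
    atomic (App t (Val v)) (dmap (fun u => App u (Val v)) d)
| at_seqC t s d : atomic t d -> atomic (Seq t s) (dmap (fun u => Seq u s) d)
| at_letC t s d : atomic t d -> atomic (LetP t s) (dmap (fun u => LetP u s) d)
| at_matchC t s1 s2 d : atomic t d ->
    atomic (Match t s1 s2) (dmap (fun u => Match u s1 s2) d).

Definition step (d d' : dist) : Prop :=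
  exists (a : Cplx) (s : term) (s' r : dist),
    [/\ dequiv d (DAdd (DScale a (DT s)) r), atomic s s' &
        dequiv d' (DAdd (DScale a s') r)].

Inductive eval : dist -> dist -> Prop :=
| ev_refl d : eval d d
| ev_step d e f : step d e -> eval e f -> eval d f.

Definition inner (v w : dist) : Cplx :=
  \sum_(x <- dom v) \sum_(y <- dom w) ((coef v x)^* * coef w y * (x == y)%:R).

Definition norm (v : dist) : Cplx := sqrtC (inner v v).

Fixpoint lincomb (l : seq (Cplx * dist)) : dist :=
  match l with
  | [::] => DZero
  | (a, v) :: l => DAdd (DScale a v) (lincomb l)
  end.

Definition Span (X : dist -> Prop) (d : dist) : Prop :=
  exists l : seq (Cplx * dist), (forall p, List.In p l -> X p.2) /\ dequiv d (lincomb l).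

Inductive ty : Type :=
| TUnit : ty
| TSum : ty -> ty -> ty
| TSharp : ty -> ty
| TArrow : ty -> ty -> ty.

Definition TBool : ty := TSum TUnit TUnit.

Fixpoint interp (A : ty) : dist -> Prop :=
  match A with
  | TUnit => fun d => dequiv d (DT (Val Star))
  | TSum A B => fun d =>
      (exists v, interp A v /\ dequiv d (dmapv Inl v)) \/
      (exists w, interp B w /\ dequiv d (dmapv Inr w))
  | TSharp A => fun d =>
      [/\ Span (interp A) d, closed_value_dist d & norm d = 1]
  | TArrow A B => fun d =>
      exists t : dist, [/\ dequiv d (DT (Val (Lam t))), closed_value (Lam t) &
        forall v, interp A v ->
          exists v', eval (bsubst t v) v' /\ interp B v']
  end.

Definition realizes (d : dist) (A : ty) : Prop :=
  exists v, eval d v /\ interp A v.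

Definition C2 := (Cplx * Cplx)%type.

Definition piB (d : dist) : C2 := (coef d (Val tt_v), coef d (Val ff_v)).

Definition BoolSpan (d : dist) : Prop :=
  Span (fun x => x = DT (Val tt_v) \/ x = DT (Val ff_v)) d.

Definition represents (d : dist) (F : C2 -> C2) : Prop :=
  forall v, BoolSpan v ->
    exists w, [/\ BoolSpan w, eval (dapp d v) w & piB w = F (piB v)].

Definition inner2 (u v : C2) : Cplx := (u.1)^* * v.1 + (u.2)^* * v.2.

Definition linear2 (F : C2 -> C2) : Prop :=
  forall (a : Cplx) (u v : C2),
    F (a * u.1 + v.1, a * u.2 + v.2) = (a * (F u).1 + (F v).1, a * (F u).2 + (F v).2).

Definition unitary2 (F : C2 -> C2) : Prop :=
  linear2 F /\ forall u v : C2, inner2 (F u) (F v) = inner2 u v.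

(* Main.v *)
Require Import Defs.
From HB Require Import structures.
From mathcomp Require Import all_boot all_algebra.
From mathcomp Require Import complex.
From mathcomp Require Import boolp reals Rstruct.
From mathcomp Require Import ring.
Set Implicit Arguments. Unset Strict Implicit. Unset Printing Implicit Defensive.
Import GRing.Theory Num.Theory.
Local Open Scope ring_scope.

Definition sem_eq (d e : dist) : Prop :=
  (forall u, coef d u = coef e u) /\ (forall u, (u \in dom_raw d) = (u \in dom_raw e)).

Lemma sem_eq_refl d : sem_eq d d.
Proof. by split. Qed.
Lemma sem_eq_sym d e : sem_eq d e -> sem_eq e d.
Proof. by case=> H1 H2; split=> u; rewrite ?H1 ?H2. Qed.
Lemma sem_eq_trans d e f : sem_eq d e -> sem_eq e f -> sem_eq d f.
Proof. by case=> H1 H2 [H3 H4]; split=> u; rewrite ?H1 ?H2 ?H3 ?H4. Qed.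
Lemma sem_eq_add d d' e e' : sem_eq d d' -> sem_eq e e' -> sem_eq (DAdd d e) (DAdd d' e').
Proof. by case=> H1 H2 [H3 H4]; split=> u /=; rewrite ?mem_cat ?H1 ?H2 ?H3 ?H4. Qed.
Lemma sem_eq_scale a d d' : sem_eq d d' -> sem_eq (DScale a d) (DScale a d').
Proof. by case=> H1 H2; split=> u /=; rewrite ?H1 ?H2. Qed.

Lemma dequiv_sound d e : dequiv d e -> sem_eq d e.
Proof.
elim=> {d e} /=.
- by move=> d; apply: sem_eq_refl.
- by move=> d e _; apply: sem_eq_sym.
- by move=> d e f _ H1 _ H2; apply: sem_eq_trans H1 H2.
- by move=> d1 d1' d2 d2' _ H1 _ H2; apply: sem_eq_add.
- by move=> a d d' _ H; apply: sem_eq_scale.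
- by move=> d; split=> u /=; rewrite ?addr0 ?cats0.
- by move=> d; split=> u /=; rewrite ?mul1r.
- by move=> a b d; split=> u /=; rewrite ?mulrA.
- by move=> d e; split=> u /=; [rewrite addrC | rewrite !mem_cat orbC].
- by move=> d e f; split=> u /=; [rewrite addrA | rewrite !mem_cat orbA].
- by move=> a b d; split=> u /=; [rewrite mulrDl | rewrite mem_cat orbb].
- by move=> a d e; split=> u /=; rewrite ?mulrDr.
Qed.

Lemma coef_notin d u : u \notin dom_raw d -> coef d u = 0.
Proof.
elim: d => //= [s|d1 IH1 d2 IH2|a d IH].
- by rewrite inE eq_sym => /negbTE ->.
- by rewrite mem_cat negb_or => /andP [/IH1 -> /IH2 ->]; rewrite addr0.
- by move=> /IH ->; rewrite mulr0.
Qed.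

Lemma atomic_val v d : ~ atomic (Val v) d.
Proof. by move=> H; inversion H. Qed.

Lemma atomic_det s d1 : atomic s d1 -> forall d2, atomic s d2 -> d1 = d2.
Proof.
elim=> {s d1}.
- by move=> d v d2 H; inversion H; subst => //; exfalso; apply: atomic_val; eauto.
- by move=> s d2 H; inversion H; subst => //; exfalso; apply: atomic_val; eauto.
- by move=> v w s d2 H; inversion H; subst => //; exfalso; apply: atomic_val; eauto.
- by move=> v s1 s2 d2 H; inversion H; subst => //; exfalso; apply: atomic_val; eauto.
- by move=> v s1 s2 d2 H; inversion H; subst => //; exfalso; apply: atomic_val; eauto.
- move=> s t d Ht IH d2 H; inversion H; subst; try by exfalso; apply: atomic_val; eauto.
  by rewrite (IH _ H3).
- move=> t v d Ht IH d2 H; inversion H; subst; try by exfalso; apply: atomic_val; eauto.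
  by rewrite (IH _ H3).
- move=> t s d Ht IH d2 H; inversion H; subst; try by exfalso; apply: atomic_val; eauto.
  by rewrite (IH _ H3).
- move=> t s d Ht IH d2 H; inversion H; subst; try by exfalso; apply: atomic_val; eauto.
  by rewrite (IH _ H3).
- move=> t s1 s2 d Ht IH d2 H; inversion H; subst; try by exfalso; apply: atomic_val; eauto.
  by rewrite (IH _ H4).
Qed.
Inductive bs : term -> dist -> Prop :=
| bs_val v : bs (Val v) (DT (Val v))
| bs_red s d w : atomic s d -> bsd d w -> bs s w
with bsd : dist -> dist -> Prop :=
| bsd_zero : bsd DZero DZero
| bsd_t s w : bs s w -> bsd (DT s) w
| bsd_add d1 d2 w1 w2 : bsd d1 w1 -> bsd d2 w2 -> bsd (DAdd d1 d2) (DAdd w1 w2)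
| bsd_scale a d w : bsd d w -> bsd (DScale a d) (DScale a w).

Scheme bs_ind2 := Minimality for bs Sort Prop
with bsd_ind2 := Minimality for bsd Sort Prop.
Combined Scheme bs_mut from bs_ind2, bsd_ind2.

Lemma bs_uniq_all :
  (forall s w1, bs s w1 -> forall w2, bs s w2 -> sem_eq w1 w2) /\
  (forall d w1, bsd d w1 -> forall w2, bsd d w2 -> sem_eq w1 w2).
Proof.
apply: bs_mut.
all: clear.
all: try (move=> v w2 H; inversion H; subst; [exact: sem_eq_refl | by exfalso; apply: atomic_val; eauto]).
all: try (move=> s d w Ha Hd IH w2 H; inversion H; subst;
     [by exfalso; apply: atomic_val; eauto | by rewrite (atomic_det Ha H0) in IH; apply: IH]).
all: try (move=> w2 H; inversion H; exact: sem_eq_refl).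
all: try (move=> s w Hs IH w2 H; inversion H; subst; exact: IH).
all: try (move=> d1 d2 w1 w2 H1 IH1 H2 IH2 w3 H; inversion H; subst; apply: sem_eq_add; [exact: IH1 | exact: IH2]).
all: try (move=> a d w H1 IH w3 H; inversion H; subst; apply: sem_eq_scale; exact: IH).
Qed.

Lemma bs_uniq s w1 w2 : bs s w1 -> bs s w2 -> sem_eq w1 w2.
Proof. by move=> H1 H2; apply: (proj1 bs_uniq_all) H2. Qed.
Lemma bsd_uniq d w1 w2 : bsd d w1 -> bsd d w2 -> sem_eq w1 w2.
Proof. by move=> H1 H2; apply: (proj2 bs_uniq_all) H2. Qed.
Lemma bsd_add_inv d1 d2 w : bsd (DAdd d1 d2) w ->
  exists w1 w2, [/\ w = DAdd w1 w2, bsd d1 w1 & bsd d2 w2].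
Proof. by move=> H; inversion H; subst; do 2 eexists; split; eauto. Qed.
Lemma bsd_scale_inv a d w : bsd (DScale a d) w ->
  exists w1, w = DScale a w1 /\ bsd d w1.
Proof. by move=> H; inversion H; subst; eauto. Qed.
Lemma bsd_zero_inv w : bsd DZero w -> w = DZero.
Proof. by move=> H; inversion H. Qed.
Lemma bsd_t_inv s w : bsd (DT s) w -> bs s w.
Proof. by move=> H; inversion H. Qed.

Definition bsd_sim d e :=
  forall w, bsd d w -> exists w', bsd e w' /\ sem_eq w w'.

Ltac binv := repeat match goal with
  | H : bsd (DAdd _ _) _ |- _ => let a := fresh "w" in let b := fresh "w" in
        let E := fresh "E" in let H1 := fresh "H" in let H2 := fresh "H" in
        case: (bsd_add_inv H) => a [b [E H1 H2]]; subst; clear H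
  | H : bsd (DScale _ _) _ |- _ => let a := fresh "w" in
        let E := fresh "E" in let H1 := fresh "H" in
        case: (bsd_scale_inv H) => a [E H1]; subst; clear H
  | H : bsd DZero _ |- _ => have E := bsd_zero_inv H; subst; clear H
  end.

Lemma bsd_dequiv d e : dequiv d e -> bsd_sim d e /\ bsd_sim e d.
Proof.
elim=> {d e}.
- by move=> d; split=> w H; exists w; split=> //; apply: sem_eq_refl.
- by move=> d e _ [H1 H2]; split.
- move=> d e f _ [H1 H2] _ [H3 H4]; split=> w H.
  + have [w1 [Hw1 E1]] := H1 _ H; have [w2 [Hw2 E2]] := H3 _ Hw1.
    by exists w2; split=> //; apply: sem_eq_trans E2.
  + have [w1 [Hw1 E1]] := H4 _ H; have [w2 [Hw2 E2]] := H2 _ Hw1.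
    by exists w2; split=> //; apply: sem_eq_trans E2.
- move=> d1 d1' d2 d2' _ [H1 H2] _ [H3 H4]; split=> w H; binv.
  + have [w1' [Hw1 E1]] := H1 _ H0; have [w2' [Hw2 E2]] := H3 _ H5.
    by exists (DAdd w1' w2'); split; [constructor | apply: sem_eq_add].
  + have [w1' [Hw1 E1]] := H2 _ H0; have [w2' [Hw2 E2]] := H4 _ H5.
    by exists (DAdd w1' w2'); split; [constructor | apply: sem_eq_add].
- move=> a d d' _ [H1 H2]; split=> w H; binv.
  + have [w1' [Hw1 E1]] := H1 _ H0.
    by exists (DScale a w1'); split; [constructor | apply: sem_eq_scale].
  + have [w1' [Hw1 E1]] := H2 _ H0.
    by exists (DScale a w1'); split; [constructor | apply: sem_eq_scale].
- move=> d; split=> w H.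
  + binv.
    by exists w0; split=> //; split=> u /=; rewrite ?addr0 ?cats0.
  + exists (DAdd w DZero); split; first by constructor=> //; constructor.
    by split=> u /=; rewrite ?addr0 ?cats0.
- move=> d; split=> w H.
  + binv.
    by exists w0; split=> //; split=> u /=; rewrite ?mul1r.
  + exists (DScale 1 w); split; first by constructor.
    by split=> u /=; rewrite ?mul1r.
- move=> a b d; split=> w H; binv.
  + by eexists; split; [constructor; eassumption | split=> u /=; rewrite ?mulrA].
  + by eexists; split; [repeat (eassumption || constructor) | split=> u /=; rewrite ?mulrA].
- move=> d e; split=> w H; binv.
  + eexists; split; first by constructor; eassumption.
    by split=> u /=; [rewrite addrC | rewrite !mem_cat orbC].
  + eexists; split; first by constructor; eassumption.
    by split=> u /=; [rewrite addrC | rewrite !mem_cat orbC].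
- move=> d e f; split=> w H; binv.
  + eexists; split; first by repeat (eassumption || constructor).
    by split=> u /=; [rewrite addrA | rewrite !mem_cat orbA].
  + eexists; split; first by repeat (eassumption || constructor).
    by split=> u /=; [rewrite addrA | rewrite !mem_cat orbA].
- move=> a b d; split=> w H; binv.
  + eexists; split; first by repeat (eassumption || constructor).
    by split=> u /=; [rewrite mulrDl | rewrite mem_cat orbb].
  + match goal with H1 : bsd d ?x, H2 : bsd d ?y |- _ =>
      have [E1 E2] := bsd_uniq H1 H2;
      exists (DScale (a + b) x); split; first by constructor end.
    by split=> u /=; [rewrite mulrDl E1 | rewrite mem_cat E2 orbb].
- move=> a d e; split=> w H; binv.
  + eexists; split; first by repeat (eassumption || constructor).
    by split=> u /=; rewrite ?mulrDr.
  + eexists; split; first by repeat (eassumption || constructor).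
    by split=> u /=; rewrite ?mulrDr.
Qed.
Lemma step_back d e w : step d e -> bsd e w -> exists w', bsd d w' /\ sem_eq w w'.
Proof.
case=> a [s [s' [r [E1 Ha E2]]]] Hw.
have [w1 [Hw1 S1]] := (proj1 (bsd_dequiv E2)) _ Hw.
binv.
match goal with H1 : bsd s' ?x, H2 : bsd r ?y |- _ =>
have Hx : bsd (DAdd (DScale a (DT s)) r) (DAdd (DScale a x) y) by
  repeat constructor => //; apply: bs_red Ha H1 end.
have [w3 [Hw3 S3]] := (proj2 (bsd_dequiv E1)) _ Hx.
by exists w3; split=> //; apply: sem_eq_trans S3.
Qed.

Lemma bsd_value d : is_value_dist d -> bsd d d.
Proof.
elim: d => //= [|[v| | | | ] //|d1 IH1 d2 IH2 [/IH1 H1 /IH2 H2]|a d IH /IH H].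
- by constructor.
- by do 2 constructor.
- by constructor.
- by constructor.
Qed.

Lemma eval_back d e : eval d e -> is_value_dist e -> exists w, bsd d w /\ sem_eq w e.
Proof.
elim=> {d e}.
- by move=> d Hv; exists d; split; [apply: bsd_value | apply: sem_eq_refl].
- move=> d e f Hs _ IH Hv; have [w [Hw S]] := IH Hv.
  have [w' [Hw' S']] := step_back Hs Hw.
  by exists w'; split=> //; apply: sem_eq_trans (sem_eq_sym S') S.
Qed.

Lemma eval_trans d e f : eval d e -> eval e f -> eval d f.
Proof. by elim=> // d0 e0 f0 H _ IH /IH; apply: ev_step. Qed.

Lemma step_addR d e r' : step d e -> step (DAdd d r') (DAdd e r').
Proof.
case=> a [s [s' [r [E1 Ha E2]]]]; exists a, s, s', (DAdd r r'); split=> //.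
- apply: dq_trans (dq_add E1 (dq_refl r')) _; apply: dq_sym; apply: dq_addA.
- apply: dq_trans (dq_add E2 (dq_refl r')) _; apply: dq_sym; apply: dq_addA.
Qed.

Lemma step_addL d e r' : step d e -> step (DAdd r' d) (DAdd r' e).
Proof.
move=> /(step_addR r') [a [s [s' [r [E1 Ha E2]]]]]; exists a, s, s', r; split=> //.
- exact: dq_trans (dq_addC _ _) E1.
- exact: dq_trans (dq_addC _ _) E2.
Qed.

Lemma step_scale b d e : step d e -> step (DScale b d) (DScale b e).
Proof.
case=> a [s [s' [r [E1 Ha E2]]]]; exists (b * a), s, s', (DScale b r); split=> //.
- apply: dq_trans (dq_scale b E1) _; apply: dq_trans (dq_scaleDr _ _ _) _.
  by apply: dq_add (dq_refl _); apply: dq_scaleA.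
- apply: dq_trans (dq_scale b E2) _; apply: dq_trans (dq_scaleDr _ _ _) _.
  by apply: dq_add (dq_refl _); apply: dq_scaleA.
Qed.

Lemma step_DT s d : atomic s d -> step (DT s) d.
Proof.
move=> Ha; exists 1, s, d, DZero; split=> //.
- by apply: dq_sym; apply: dq_trans (dq_add0 _) (dq_scale1 _).
- by apply: dq_sym; apply: dq_trans (dq_add0 _) (dq_scale1 _).
Qed.

Lemma eval_addR d e r : eval d e -> eval (DAdd d r) (DAdd e r).
Proof.
elim=> [d0|d0 e0 f0 H _ IH]; first exact: ev_refl.
exact: ev_step (step_addR r H) IH.
Qed.
Lemma eval_addL d e r : eval d e -> eval (DAdd r d) (DAdd r e).
Proof.
elim=> [d0|d0 e0 f0 H _ IH]; first exact: ev_refl.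
exact: ev_step (step_addL r H) IH.
Qed.
Lemma eval_scale a d e : eval d e -> eval (DScale a d) (DScale a e).
Proof.
elim=> [d0|d0 e0 f0 H _ IH]; first exact: ev_refl.
exact: ev_step (step_scale a H) IH.
Qed.

Lemma bs_fwd_all :
  (forall s w, bs s w -> eval (DT s) w) /\ (forall d w, bsd d w -> eval d w).
Proof.
apply: bs_mut.
- by move=> v; apply: ev_refl.
- by move=> s d w Ha _ IH; apply: ev_step (step_DT Ha) IH.
- exact: ev_refl.
- by [].
- by move=> d1 d2 w1 w2 _ IH1 _ IH2; apply: eval_trans (eval_addR _ IH1) (eval_addL _ IH2).
- by move=> a d w _ IH; apply: eval_scale.
Qed.

Lemma bsd_fwd d w : bsd d w -> eval d w.
Proof. exact: (proj2 bs_fwd_all). Qed.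
Definition boolish (d : dist) : Prop :=
  forall u, u \in dom_raw d -> u = Val tt_v \/ u = Val ff_v.

Lemma boolish_sem d e : sem_eq d e -> boolish e -> boolish d.
Proof. by case=> _ H2 Hb u; rewrite H2; apply: Hb. Qed.

Lemma boolish_dequiv d e : dequiv d e -> boolish e -> boolish d.
Proof. by move/dequiv_sound; apply: boolish_sem. Qed.

Lemma scale_zero a : dequiv (DScale a DZero) DZero.
Proof.
set z := DScale a DZero; set y := DScale (1 - a) DZero.
have E1 : dequiv DZero (DAdd z y).
  apply: dq_trans (dq_sym (dq_scale1 _)) _.
  have -> : (1 : Cplx) = a + (1 - a) by rewrite addrC subrK.
  exact: dq_scaleDl.
have E2 : dequiv z (DAdd z z).
  apply: dq_trans (dq_scale a (dq_sym (dq_add0 DZero))) _; exact: dq_scaleDr.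
apply: dq_trans (dq_sym (dq_add0 z)) _.
apply: dq_trans (dq_add (dq_refl z) E1) _.
apply: dq_trans (dq_addA _ _ _) _.
apply: dq_trans (dq_add (dq_sym E2) (dq_refl y)) _.
exact: dq_sym E1.
Qed.

Lemma lincomb_cat l1 l2 : dequiv (DAdd (lincomb l1) (lincomb l2)) (lincomb (l1 ++ l2)).
Proof.
elim: l1 => [|[a v] l1 IH] /=.
- exact: dq_trans (dq_addC _ _) (dq_add0 _).
- apply: dq_trans (dq_sym (dq_addA _ _ _)) _.
  exact: dq_add (dq_refl _) IH.
Qed.

Lemma lincomb_scale a l :
  dequiv (DScale a (lincomb l)) (lincomb (map (fun p => (a * p.1, p.2)) l)).
Proof.
elim: l => [|[b v] l IH] /=; first exact: scale_zero.
apply: dq_trans (dq_scaleDr _ _ _) _.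
exact: dq_add (dq_scaleA _ _ _) IH.
Qed.

Definition isB (x : dist) := x = DT (Val tt_v) \/ x = DT (Val ff_v).

Lemma boolish_lincomb d : boolish d ->
  exists l, (forall p, List.In p l -> isB p.2) /\ dequiv d (lincomb l).
Proof.
elim: d => [|s|d1 IH1 d2 IH2|a d IH] Hb.
- by exists [::]; split=> //; apply: dq_refl.
- exists [:: (1, DT s)]; split.
  + move=> p [<-|[]] /=; rewrite /isB.
    by case: (Hb s); rewrite ?inE ?eqxx // => ->; [left|right].
  + by apply: dq_sym; apply: dq_trans (dq_add0 _) (dq_scale1 _).
- have [l1 [H1 E1]] : exists l, (forall p, List.In p l -> isB p.2) /\ dequiv d1 (lincomb l).
    by apply: IH1 => u Hu; apply: Hb; rewrite /= mem_cat Hu.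
  have [l2 [H2 E2]] : exists l, (forall p, List.In p l -> isB p.2) /\ dequiv d2 (lincomb l).
    by apply: IH2 => u Hu; apply: Hb; rewrite /= mem_cat Hu orbT.
  exists (l1 ++ l2); split.
  + move=> p Hp; case: (List.in_app_or l1 l2 p Hp); [exact: H1 | exact: H2].
  + exact: dq_trans (dq_add E1 E2) (lincomb_cat _ _).
- have [l [H E]] := IH Hb.
  exists (map (fun p => (a * p.1, p.2)) l); split.
  + by move=> p /List.in_map_iff [q [<- Hq]] /=; apply: H.
  + exact: dq_trans (dq_scale a E) (lincomb_scale _ _).
Qed.

Lemma interpB_tt : interp TBool (DT (Val tt_v)).
Proof. by left; exists (DT (Val Star)); split; apply: dq_refl. Qed.
Lemma interpB_ff : interp TBool (DT (Val ff_v)).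
Proof. by right; exists (DT (Val Star)); split; apply: dq_refl. Qed.

Lemma boolish_BoolSpan d : boolish d -> BoolSpan d.
Proof. by move=> /boolish_lincomb [l [H E]]; exists l; split. Qed.

Lemma boolish_SpanB d : boolish d -> Span (interp TBool) d.
Proof.
move=> /boolish_lincomb [l [H E]]; exists l; split=> // p /H [->|->].
- exact: interpB_tt.
- exact: interpB_ff.
Qed.

Lemma boolish_cvd d : boolish d -> closed_value_dist d.
Proof.
rewrite /closed_value_dist /closed_dist.
elim: d => [|s|d1 IH1 d2 IH2|a d IH] Hb /=.
- by [].
- by case: (Hb s); rewrite ?inE ?eqxx // => ->.
- have [A1 B1] : is_value_dist d1 /\ wf_d 0 d1.
    by apply: IH1 => u Hu; apply: Hb; rewrite /= mem_cat Hu.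
  have [A2 B2] : is_value_dist d2 /\ wf_d 0 d2.
    by apply: IH2 => u Hu; apply: Hb; rewrite /= mem_cat Hu orbT.
  by [].
- exact: IH.
Qed.

Lemma boolish_lincombB l : (forall p, List.In p l -> boolish p.2) -> boolish (lincomb l).
Proof.
elim: l => [|[a v] l IH] H u /=; first by [].
rewrite mem_cat => /orP [Hu|Hu].
- by apply: (H (a, v)) => //; left.
- by apply: IH => // p Hp; apply: H; right.
Qed.

Lemma dom_dmapv f d u : u \in dom_raw (dmapv f d) ->
  exists x, u = Val (f x) /\ Val x \in dom_raw d.
Proof.
elim: d => [|s|d1 IH1 d2 IH2|a d IH] //=.
- case: s => // v; rewrite inE => /eqP ->; exists v; split=> //; exact: mem_head.
- rewrite mem_cat => /orP [/IH1|/IH2] [x [-> Hx]]; exists x; split=> //;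
  by rewrite mem_cat Hx ?orbT.
Qed.

Lemma boolish_interpB x : interp TBool x -> boolish x.
Proof.
case=> [[v [Hv E]]|[v [Hv E]]]; apply: (boolish_dequiv E) => u /dom_dmapv [y [-> Hy]];
  have [_ D] := dequiv_sound Hv; rewrite D inE in Hy; move/eqP: Hy => [->].
- by left.
- by right.
Qed.

Lemma boolish_Span d : Span (interp TBool) d -> boolish d.
Proof.
case=> l [H E]; apply: (boolish_dequiv E); apply: boolish_lincombB.
by move=> p /H; apply: boolish_interpB.
Qed.

Lemma boolish_BoolSpan_inv d : BoolSpan d -> boolish d.
Proof.
case=> l [H E]; apply: (boolish_dequiv E); apply: boolish_lincombB.
move=> p /H [->|->] u; rewrite inE => /eqP ->; by [left|right].
Qed.
Definition TT : term := Val tt_v.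
Definition FF : term := Val ff_v.

Lemma TT_FF : (TT == FF) = false.
Proof. by apply/eqP. Qed.
Lemma FF_TT : (FF == TT) = false.
Proof. by apply/eqP. Qed.
Lemma FF_nTT : FF \notin [:: TT].
Proof. by rewrite inE FF_TT. Qed.
Lemma TT_nFF : TT \notin [:: FF].
Proof. by rewrite inE TT_FF. Qed.

Lemma sum2 (s : seq term) (g : term -> Cplx) : uniq s ->
  (forall x, x \in s -> x = TT \/ x = FF) -> (forall x, x \notin s -> g x = 0) ->
  \sum_(x <- s) g x = g TT + g FF.
Proof.
move=> Hu Hs Hg.
have HT : TT \notin s -> g TT = 0 by apply: Hg.
have HF : FF \notin s -> g FF = 0 by apply: Hg.
case: s Hu Hs Hg HT HF => [|x [|y [|z s]]] Hu Hs Hg HT HF.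
- by rewrite big_nil HT // HF // addr0.
- rewrite big_cons big_nil addr0.
  case: (Hs x (mem_head _ _)) => Ex; rewrite Ex in HF HT *.
  + by rewrite (HF FF_nTT) addr0.
  + by rewrite (HT TT_nFF) add0r.
- rewrite !big_cons big_nil addr0.
  move: Hu => /=; rewrite inE andbT => Hxy.
  case: (Hs x (mem_head _ _)) => Ex; case: (Hs y); rewrite ?inE ?eqxx ?orbT // => Ey;
    subst; first [by rewrite eqxx in Hxy | by [] | by rewrite addrC].
- exfalso; move: Hu; rewrite !cons_uniq => /andP [Hx /andP [Hy _]].
  have Ex := Hs x (mem_head _ _).
  have Ey : y = TT \/ y = FF by apply: Hs; rewrite !inE eqxx ?orbT.
  have Ez : z = TT \/ z = FF by apply: Hs; rewrite !inE eqxx ?orbT.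
  case: Ex => Ex; case: Ey => Ey; case: Ez => Ez; rewrite Ex Ey Ez in Hx Hy;
    by rewrite !inE !eqxx ?orbT in Hx Hy.
Qed.

Lemma notin_dom d x : x \notin dom d -> coef d x = 0.
Proof. by rewrite /dom mem_undup; apply: coef_notin. Qed.

Lemma inner_bool d e : boolish d -> boolish e ->
  inner d e = (coef d TT)^* * coef e TT + (coef d FF)^* * coef e FF.
Proof.
move=> Hd He; rewrite /inner.
have Hd' : forall x, x \in dom d -> x = TT \/ x = FF by move=> x; rewrite mem_undup; apply: Hd.
have He' : forall x, x \in dom e -> x = TT \/ x = FF by move=> x; rewrite mem_undup; apply: He.
rewrite (eq_bigr (fun x => (coef d x)^* * coef e TT * (x == TT)%:R +
                           (coef d x)^* * coef e FF * (x == FF)%:R)); last first.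
  move=> x _; rewrite (sum2 (g := fun y => (coef d x)^* * coef e y * (x == y)%:R))
    ?undup_uniq //.
  by move=> y /notin_dom ->; rewrite mulr0 mul0r.
rewrite (sum2 (g := fun x => (coef d x)^* * coef e TT * (x == TT)%:R +
                           (coef d x)^* * coef e FF * (x == FF)%:R)) ?undup_uniq //.
- by rewrite !eqxx TT_FF FF_TT /= !mulr1 !mulr0 addr0 add0r.
- by move=> x /notin_dom ->; rewrite rmorph0 !mul0r addr0.
Qed.
Lemma coef_DT s u : coef (DT s) u = if s == u then 1 else 0.
Proof. by []. Qed.
Lemma coef_add d e u : coef (DAdd d e) u = coef d u + coef e u.
Proof. by []. Qed.
Lemma coef_scale a d u : coef (DScale a d) u = a * coef d u.
Proof. by []. Qed.
Lemma coef_zero u : coef DZero u = 0.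
Proof. by []. Qed.

Lemma norm_inner d : norm d = 1 -> inner d d = 1.
Proof. by rewrite /norm => H; rewrite -(sqrtCK (inner d d)) H expr1n. Qed.
Lemma inner_norm d : inner d d = 1 -> norm d = 1.
Proof. by rewrite /norm => ->; rewrite sqrtC1. Qed.

Lemma cD (x y : Cplx) : (x + y)^* = x^* + y^*.
Proof. exact: rmorphD. Qed.
Lemma cM (x y : Cplx) : (x * y)^* = x^* * y^*.
Proof. exact: rmorphM. Qed.
Lemma c0 : (0 : Cplx)^* = 0.
Proof. exact: rmorph0. Qed.

Lemma alg_orth (a b c d k : Cplx) : a^* * a + b^* * b = 1 -> c^* * c + d^* * d = 1 ->
  k^* * k = 2^-1 ->
  (k*a + k*c)^* * (k*a + k*c) + (k*b + k*d)^* * (k*b + k*d) = 1 ->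
  (k*a + k*'i*c)^* * (k*a + k*'i*c) + (k*b + k*'i*d)^* * (k*b + k*'i*d) = 1 ->
  a^* * c + b^* * d = 0.
Proof.
move=> N1 N2 HK E3 E4.
rewrite !cD !cM in E3.
rewrite !cD !cM conjCi in E4.
set P := a^* * c + b^* * d; set P' := c^* * a + d^* * b.
have G3 : (k^* * k) * ((a^* * a + b^* * b) + (c^* * c + d^* * d) + P + P') = 1.
  by rewrite -E3 /P /P'; ring.
have G4 : (k^* * k) * ((a^* * a + b^* * b) + (-'i * 'i) * (c^* * c + d^* * d)
            + 'i * P - 'i * P') = 1.
  by rewrite -E4 /P /P'; ring.
have ii : -'i * 'i = 1 :> Cplx by rewrite mulNr -expr2 sqrCi opprK.
rewrite N1 N2 HK in G3; rewrite N1 N2 HK ii in G4.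
have two : (2 : Cplx) != 0 by rewrite pnatr_eq0.
have H3 : P + P' = 0.
  have -> : P + P' = 2 * (2^-1 * (1 + 1 + P + P')) - 2 by field.
  by rewrite G3 mulr1 subrr.
have H4 : 'i * (P - P') = 0.
  have -> : 'i * (P - P') = 2 * (2^-1 * (1 + 1 * 1 + 'i * P - 'i * P')) - 2 by field.
  by rewrite G4 mulr1 subrr.
have H5 : P - P' = 0.
  have -> : P - P' = (-'i * 'i) * (P - P') by rewrite ii mul1r.
  by rewrite -mulrA H4 mulr0.
have -> : P = 2^-1 * ((P + P') + (P - P')) by field.
by rewrite H3 H5 addr0 mulr0.
Qed.

Lemma alg_unitary (a b c d : Cplx) : a^* * a + b^* * b = 1 -> c^* * c + d^* * d = 1 ->
  a^* * c + b^* * d = 0 ->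
  unitary2 (fun u => (u.1 * a + u.2 * c, u.1 * b + u.2 * d)).
Proof.
move=> N1 N2 P; split.
- by move=> x u v /=; congr pair; ring.
- move=> u v; rewrite /inner2 /= !cD !cM.
  have P' : c^* * a + d^* * b = 0.
    have <- : (a^* * c + b^* * d)^* = c^* * a + d^* * b.
      by rewrite cD !cM !conjCK; ring.
    by rewrite P c0.
  transitivity (u.1^* * v.1 * (a^* * a + b^* * b) + u.1^* * v.2 * (a^* * c + b^* * d)
     + u.2^* * v.1 * (c^* * a + d^* * b) + u.2^* * v.2 * (c^* * c + d^* * d)); first by ring.
  by rewrite N1 N2 P P'; ring.
Qed.
Definition SB := TSharp TBool.

Lemma interpSB d : boolish d -> inner d d = 1 -> interp SB d.
Proof.
move=> Hb Hi; split.
- exact: boolish_SpanB.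
- exact: boolish_cvd.
- exact: inner_norm.
Qed.

Lemma interpSB_inv d : interp SB d -> boolish d /\ inner d d = 1.
Proof. by case=> Hs _ Hn; split; [apply: boolish_Span | apply: norm_inner]. Qed.

Lemma sem_inner d e : sem_eq d e -> boolish e -> inner d d = inner e e.
Proof.
move=> S He; have Hd := boolish_sem S He.
by rewrite !inner_bool //; case: S => S1 _; rewrite !S1.
Qed.

Lemma get_res t v :
  (forall v, interp SB v -> exists v', eval (bsubst t v) v' /\ interp SB v') ->
  interp SB v -> exists W, [/\ bsd (bsubst t v) W, boolish W & inner W W = 1].
Proof.
move=> H /H [v' [Hev Hv']].
have [Hb Hi] := interpSB_inv Hv'.
have [W [HW S]] := eval_back Hev (proj1 (boolish_cvd Hb)).
exists W; split=> //; first exact: boolish_sem S Hb.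
by rewrite (sem_inner S Hb).
Qed.

Lemma build (f : term -> term) W1 W2 v : boolish v ->
  bsd (DT (f TT)) W1 -> bsd (DT (f FF)) W2 ->
  exists W, [/\ bsd (dmap f v) W,
     (forall u, coef W u = coef v TT * coef W1 u + coef v FF * coef W2 u) &
     (forall u, u \in dom_raw W -> u \in dom_raw W1 \/ u \in dom_raw W2)].
Proof.
move=> Hb H1 H2; elim: v Hb => [|s|d1 IH1 d2 IH2|a d IH] Hb.
- exists DZero; split=> //; first exact: bsd_zero.
  by move=> u; rewrite !coef_zero !mul0r addr0.
- case: (Hb s); first by rewrite inE eqxx.
  + move=> ->; exists W1; split=> // [u|u]; last by left.
    by rewrite !coef_DT eqxx TT_FF mul1r mul0r addr0.
  + move=> ->; exists W2; split=> // [u|u]; last by right.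
    by rewrite !coef_DT eqxx FF_TT mul1r mul0r add0r.
- have [W [HW C D]] : exists W, [/\ bsd (dmap f d1) W,
     (forall u, coef W u = coef d1 TT * coef W1 u + coef d1 FF * coef W2 u) &
     (forall u, u \in dom_raw W -> u \in dom_raw W1 \/ u \in dom_raw W2)].
    by apply: IH1 => u Hu; apply: Hb; rewrite /= mem_cat Hu.
  have [W' [HW' C' D']] : exists W, [/\ bsd (dmap f d2) W,
     (forall u, coef W u = coef d2 TT * coef W1 u + coef d2 FF * coef W2 u) &
     (forall u, u \in dom_raw W -> u \in dom_raw W1 \/ u \in dom_raw W2)].
    by apply: IH2 => u Hu; apply: Hb; rewrite /= mem_cat Hu orbT.
  exists (DAdd W W'); split.
  + exact: bsd_add.
  + by move=> u; rewrite !coef_add C C'; ring.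
  + by move=> u; rewrite /= mem_cat => /orP [/D|/D'].
- have [W [HW C D]] := IH Hb.
  exists (DScale a W); split=> //.
  + exact: bsd_scale.
  + by move=> u; rewrite !coef_scale C; ring.
Qed.

Lemma dmap_bsubst t v W : is_value_dist v ->
  bsd (dmap (App (Val (Lam t))) v) W -> bsd (bsubst t v) W.
Proof.
elim: v W => [|s|d1 IH1 d2 IH2|a d IH] W /=.
- by move=> _ H.
- case: s => // x _ /bsd_t_inv H; inversion H; subst.
  have E := atomic_det H0 (at_beta t x); subst; exact: H1.
- move=> [V1 V2] /bsd_add_inv [w1 [w2 [-> H1 H2]]].
  by apply: bsd_add; [apply: IH1 | apply: IH2].
- move=> V /bsd_scale_inv [w1 [-> H1]].
  by apply: bsd_scale; apply: IH.
Qed.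

Theorem mainTheorem1 (t : dist) :
  closed_value (Lam t) ->
  (interp (TArrow (TSharp TBool) (TSharp TBool)) (DT (Val (Lam t))) <->
   exists F : C2 -> C2, unitary2 F /\ represents (DT (Val (Lam t))) F).
Proof.
move=> Hcl; split.
- case=> t' [Eq Hcl' Hf].
  have Ett : t' = t.
    have := (proj1 (dequiv_sound Eq)) (Val (Lam t')).
    rewrite !coef_DT eqxx; case: eqP => [[->] //|_ /eqP].
    by rewrite eq_sym oner_eq0.
  subst t'.
  have Htt : interp SB (DT TT).
    apply: interpSB; first by move=> u; rewrite inE => /eqP ->; left.
    by rewrite inner_bool ?coef_DT ?eqxx ?TT_FF ?rmorph1 ?mulr1 ?mulr0 ?addr0 //;
      move=> u; rewrite inE => /eqP ->; left.
  have Hff : interp SB (DT FF).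
    apply: interpSB; first by move=> u; rewrite inE => /eqP ->; right.
    by rewrite inner_bool ?coef_DT ?eqxx ?FF_TT ?c0 ?mulr1 ?mulr0 ?add0r ?conjC1 //;
      move=> u; rewrite inE => /eqP ->; right.
  have [W1 [HW1 B1 I1]] := get_res Hf Htt.
  have [W2 [HW2 B2 I2]] := get_res Hf Hff.
  set a := coef W1 TT; set b := coef W1 FF; set c := coef W2 TT; set d := coef W2 FF.
  have N1 : a^* * a + b^* * b = 1 by rewrite -I1 inner_bool.
  have N2 : c^* * c + d^* * d = 1 by rewrite -I2 inner_bool.
  pose k : Cplx := (sqrtC 2)^-1.
  have HK : k^* * k = 2^-1.
    rewrite mulrC -normCK /k normfV ger0_norm ?sqrtC_ge0 ?ler0n //.
    by rewrite exprVn sqrtCK.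
  have ii : 'i^* * 'i = 1 :> Cplx by rewrite conjCi mulNr -expr2 sqrCi opprK.
  have two : (2 : Cplx) != 0 by rewrite pnatr_eq0.
  pose v3 := DAdd (DScale k (DT TT)) (DScale k (DT FF)).
  pose v4 := DAdd (DScale k (DT TT)) (DScale (k * 'i) (DT FF)).
  have Bv : forall a b, boolish (DAdd (DScale a (DT TT)) (DScale b (DT FF))).
    move=> a' b' u; rewrite /= !inE => /orP [/eqP ->|/eqP ->]; by [left|right].
  have Cv : forall a b, coef (DAdd (DScale a (DT TT)) (DScale b (DT FF))) TT = a /\
                        coef (DAdd (DScale a (DT TT)) (DScale b (DT FF))) FF = b.
    by move=> a' b'; rewrite !coef_add !coef_scale !coef_DT !eqxx TT_FF FF_TT
         !mulr1 !mulr0 addr0 add0r.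
  have Hv3 : interp SB v3.
    apply: interpSB; first exact: Bv.
    rewrite /v3 inner_bool //; case: (Cv k k) => -> ->.
    by rewrite HK; field.
  have Hv4 : interp SB v4.
    apply: interpSB; first exact: Bv.
    rewrite /v4 inner_bool //; case: (Cv k (k * 'i)) => -> ->.
    have -> : (k * 'i)^* * (k * 'i) = (k^* * k) * ('i^* * 'i) by rewrite cM; ring.
    by rewrite HK ii; field.
  have [W3 [HW3 B3 I3]] := get_res Hf Hv3.
  have [W4 [HW4 B4 I4]] := get_res Hf Hv4.
  case: (bsd_add_inv HW3) => y1 [y2 [E3 G1 G2]].
  case: (bsd_scale_inv G1) => z1 [E31 K1]; case: (bsd_scale_inv G2) => z2 [E32 K2].
  case: (bsd_add_inv HW4) => y3 [y4 [E4 G3 G4]].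
  case: (bsd_scale_inv G3) => z3 [E41 K3]; case: (bsd_scale_inv G4) => z4 [E42 K4].
  subst.
  have S31 := bsd_uniq HW1 K1; have S32 := bsd_uniq HW2 K2.
  have S41 := bsd_uniq HW1 K3; have S42 := bsd_uniq HW2 K4.
  have P : a^* * c + b^* * d = 0.
    apply: (alg_orth N1 N2 HK).
    + move: I3; rewrite inner_bool // !coef_add !coef_scale.
      case: S31 => R1 _; case: S32 => R2 _; rewrite -!R1 -!R2; exact: id.
    + move: I4; rewrite inner_bool // !coef_add !coef_scale.
      case: S41 => R1 _; case: S42 => R2 _; rewrite -!R1 -!R2; exact: id.
  exists (fun u => (u.1 * a + u.2 * c, u.1 * b + u.2 * d)); split.
  + exact: alg_unitary.
  + move=> v /boolish_BoolSpan_inv Hb.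
    have H1' : bsd (DT (App (Val (Lam t)) TT)) W1.
      by apply: bsd_t; apply: bs_red (at_beta t tt_v) HW1.
    have H2' : bsd (DT (App (Val (Lam t)) FF)) W2.
      by apply: bsd_t; apply: bs_red (at_beta t ff_v) HW2.
    have [W [HW C D]] := build Hb H1' H2'.
    exists W; split.
    * apply: boolish_BoolSpan => u /D [/B1|/B2] //.
    * exact: bsd_fwd HW.
    * by rewrite /piB !C.
- case=> F [[Hlin Hun] Hrep].
  exists t; split=> //; first exact: dq_refl.
  move=> v Hv; have [Hb Hi] := interpSB_inv Hv.
  have [w [Hw Hev Hpi]] := Hrep v (boolish_BoolSpan Hb).
  have Bw := boolish_BoolSpan_inv Hw.
  have [W0 [HW0 S]] := eval_back Hev (proj1 (boolish_cvd Bw)).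
  have HW1 : bsd (bsubst t v) W0.
    apply: dmap_bsubst HW0; exact: (proj1 (boolish_cvd Hb)).
  exists W0; split; first exact: bsd_fwd.
  apply: interpSB; first exact: boolish_sem S Bw.
  rewrite (sem_inner S Bw) inner_bool //.
  have -> : (coef w TT)^* * coef w TT + (coef w FF)^* * coef w FF = inner2 (piB w) (piB w) by [].
  by rewrite Hpi Hun -Hi inner_bool.
Qed.
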